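(* Let $M\in\mathrm{SL}(3,\mathbb R)$, $\mathcal D=\mathbb S_1^1$, $K=\mathcal G_{\mathcal D}(M)$, and let $(u_1,\vec v_1),\dots,(u_K,\vec v_K)\in\mathcal Q_{\mathcal D}(M)$ satisfy (V1)–(V3) and $u_i\ge0$ for all $i$. Then for all $1\le i<j\le K-1$ we have $|\vec v_i-\vec v_j|>|\vec v_j|$, and for all $1\le i<j<k\le K-1$ we have $|\vec v_i-\vec v_j-\vec v_k|\ge|\vec v_k|$.
   Context: Row vectors in $\mathbb R^3$ are written $(u,\vec v)$, $u\in\mathbb R$, $\vec v\in\mathbb R^2$; $\mathbb Z^3M=\{\vec mM:\vec m\in\mathbb Z^3\}$. For $\mathcal D\subseteq\mathbb S_1^1$ (unit circle): $\mathcal Q_{\mathcal D}(M,t)=\{(u,\vec v)\in\mathbb Z^3M:-t<u<1-t,\ \vec v\in\mathbb R_{>0}\mathcal D\}$ for $t\in(0,1)$; $\mathcal Q_{\mathcal D}(M)=\{(u,\vec v)\in\mathbb Z^3M:|u|<1,\ \vec v\in\mathbb R_{>0}\mathcal D\}$; $F_{\mathcal D}(M,t)=\min\{|\vec v|:(u,\vec v)\in\mathcal Q_{\mathcal D}(M,t)\}$; $\mathcal F_{\mathcal D}(M)=\{F_{\mathcal D}(M,t):0<t<1\}$ and $\mathcal G_{\mathcal D}(M)=|\mathcal F_{\mathcal D}(M)|$. Conditions: (V1) $0<|\vec v_1|<\cdots<|\vec v_K|$; (V2) each $\delta\in\mathcal F_{\mathcal D}(M)$ equals $|\vec v_i|$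 for some $i$; (V3) for each $i$ there is $t\in(0,1)$ with $(u_i,\vec v_i)\in\mathcal Q_{\mathcal D}(M,t)$ and $|\vec v_i|=F_{\mathcal D}(M,t)$. (For $\mathcal D=\mathbb S_1^1$, replacing $(u_i,\vec v_i)$ by its negative, one may always arrange $u_i\ge0$.) *)

(* Defs.v *)
From Stdlib Require Import Reals List.
Open Scope R_scope.

(* A real 3x3 matrix, entries M i j with i, j in {0,1,2}. *)
Definition mat3 := nat -> nat -> R.

Definition det3 (M : mat3) : R :=
    M 0%nat 0%nat * (M 1%nat 1%nat * M 2%nat 2%nat - M 1%nat 2%nat * M 2%nat 1%nat)
  - M 0%nat 1%nat * (M 1%nat 0%nat * M 2%nat 2%nat - M 1%nat 2%nat * M 2%nat 0%nat)
  + M 0%nat 2%nat * (M 1%nat 0%nat * M 2%nat 1%nat - M 1%nat 1%nat * M 2%nat 0%nat).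

Definition SL3 (M : mat3) : Prop := det3 M = 1.

Definition rowmul (a b c : Z) (M : mat3) (j : nat) : R :=
  IZR a * M 0%nat j + IZR b * M 1%nat j + IZR c * M 2%nat j.

(* (u, (v1,v2)) lies in Z^3 M *)
Definition in_lattice (M : mat3) (u v1 v2 : R) : Prop :=
  exists a b c : Z, u = rowmul a b c M 0 /\ v1 = rowmul a b c M 1 /\ v2 = rowmul a b c M 2.

Definition norm2 (x y : R) : R := sqrt (x ^ 2 + y ^ 2).

Definition unit_circle (x y : R) : Prop := x ^ 2 + y ^ 2 = 1.

Definition in_cone (D : R -> R -> Prop) (x y : R) : Prop :=
  exists r d1 d2, 0 < r /\ D d1 d2 /\ x = r * d1 /\ y = r * d2.

Definition Qt (D : R -> R -> Prop) (M : mat3) (t u v1 v2 : R) : Prop :=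
  in_lattice M u v1 v2 /\ - t < u < 1 - t /\ in_cone D v1 v2.

Definition Q (D : R -> R -> Prop) (M : mat3) (u v1 v2 : R) : Prop :=
  in_lattice M u v1 v2 /\ Rabs u < 1 /\ in_cone D v1 v2.

(* "F_D(M,t) = delta": delta is the minimum of |v| over Q_D(M,t) (attained). *)
Definition is_F (D : R -> R -> Prop) (M : mat3) (t delta : R) : Prop :=
  (exists u v1 v2, Qt D M t u v1 v2 /\ norm2 v1 v2 = delta) /\
  (forall u v1 v2, Qt D M t u v1 v2 -> delta <= norm2 v1 v2).

Definition Fset (D : R -> R -> Prop) (M : mat3) (delta : R) : Prop :=
  exists t, 0 < t < 1 /\ is_F D M t delta.

Definition has_card (S : R -> Prop) (K : nat) : Prop :=
  exists l : list R, NoDup l /\ length l = K /\ (forall x, In x l <-> S x).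

(* Main.v *)
Require Import Defs.
From Stdlib Require Import Reals List Lra Lia Classical.
Open Scope R_scope.

Lemma lat_sub M a x y b z w : in_lattice M a x y -> in_lattice M b z w ->
  in_lattice M (a-b) (x-z) (y-w).
Proof.
  intros [p [q [r [H1 [H2 H3]]]]] [p' [q' [r' [H1' [H2' H3']]]]].
  exists (p-p')%Z, (q-q')%Z, (r-r')%Z; unfold rowmul in *;
  rewrite !minus_IZR; subst; repeat split; ring.
Qed.

Lemma lat_opp M a x y : in_lattice M a x y -> in_lattice M (-a) (-x) (-y).
Proof.
  intros [p [q [r [H1 [H2 H3]]]]].
  exists (-p)%Z, (-q)%Z, (-r)%Z; unfold rowmul in *;
  rewrite !opp_IZR; subst; repeat split; ring.
Qed.

Lemma norm2_opp x y : norm2 (-x) (-y) = norm2 x y.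
Proof. unfold norm2; f_equal; ring. Qed.

Lemma norm2_00 : norm2 0 0 = 0.
Proof. unfold norm2. replace (0^2+0^2) with 0 by ring. apply sqrt_0. Qed.

Lemma cone_nz x y : ~(x = 0 /\ y = 0) -> in_cone unit_circle x y.
Proof.
  intros H.
  assert (Hp : 0 < x^2 + y^2).
  { destruct (Req_dec x 0) as [Hx|Hx].
    - assert (y <> 0) by tauto. subst. assert (0 < Rsqr y) by (apply Rsqr_pos_lt; auto). unfold Rsqr in *. lra.
    - assert (0 < Rsqr x) by (apply Rsqr_pos_lt; auto). assert (0 <= Rsqr y) by apply Rle_0_sqr. unfold Rsqr in *. lra. }
  set (r := norm2 x y).
  assert (Hr : 0 < r) by (apply sqrt_lt_R0; auto).
  assert (Hr2 : r * r = x^2 + y^2) by (apply sqrt_sqrt; lra).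
  exists r, (x / r), (y / r). repeat split; auto.
  - unfold unit_circle. field_simplify; [|lra]. rewrite <- Hr2. field. lra.
  - field; lra.
  - field; lra.
Qed.

Lemma avail M a x y t d : in_lattice M a x y -> ~(x = 0 /\ y = 0) -> 0 < t < 1 ->
  ((t < 1 - a /\ -t < a) \/ (a < t /\ -a < 1 - t)) ->
  is_F unit_circle M t d -> d <= norm2 x y.
Proof.
  intros Hl Hnz Ht Hav [_ HF].
  destruct Hav as [Ha|Ha].
  - apply (HF a). split; [auto|split; [lra|apply cone_nz; auto]].
  - rewrite <- norm2_opp. apply (HF (-a)). split; [apply lat_opp; auto|split; [lra|]].
    apply cone_nz. intros [H1 H2]. apply Hnz. lra.
Qed.

Lemma nz_of_pos x y : 0 < norm2 x y -> ~(x = 0 /\ y = 0).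
Proof. intros H [H1 H2]. subst. rewrite norm2_00 in H. lra. Qed.

Theorem proposition5p2 (M : mat3) (K : nat) (u v1 v2 : nat -> R) :
  SL3 M ->
  has_card (Fset unit_circle M) K ->
  (forall i, (1 <= i <= K)%nat -> Q unit_circle M (u i) (v1 i) (v2 i)) ->
  (* (V1) *)
  (forall i, (1 <= i <= K)%nat -> 0 < norm2 (v1 i) (v2 i)) ->
  (forall i, (1 <= i < K)%nat -> norm2 (v1 i) (v2 i) < norm2 (v1 (S i)) (v2 (S i))) ->
  (* (V2) *)
  (forall delta, Fset unit_circle M delta ->
     exists i, (1 <= i <= K)%nat /\ delta = norm2 (v1 i) (v2 i)) ->
  (* (V3) *)
  (forall i, (1 <= i <= K)%nat -> exists t, 0 < t < 1 /\
     Qt unit_circle M t (u i) (v1 i) (v2 i) /\ is_F unit_circle M t (norm2 (v1 i) (v2 i))) ->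
  (forall i, (1 <= i <= K)%nat -> 0 <= u i) ->
  (forall i j, (1 <= i)%nat -> (i < j)%nat -> (j <= K - 1)%nat ->
     norm2 (v1 i - v1 j) (v2 i - v2 j) > norm2 (v1 j) (v2 j)) /\
  (forall i j k, (1 <= i)%nat -> (i < j)%nat -> (j < k)%nat -> (k <= K - 1)%nat ->
     norm2 (v1 i - v1 j - v1 k) (v2 i - v2 j - v2 k) >= norm2 (v1 k) (v2 k)).
Proof.
  intros _ _ HQ Hpos Hinc _ HV3 Hu.
  set (N := fun i => norm2 (v1 i) (v2 i)).
  assert (Hmono : forall i j, (1 <= i)%nat -> (i < j)%nat -> (j <= K)%nat -> N i < N j).
  { intros i j Hi Hij HjK. induction j as [|j IH]; [lia|].
    destruct (Nat.eq_dec i j) as [->|Hne].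
    - apply Hinc; lia.
    - apply Rlt_trans with (N j); [apply IH; lia|apply Hinc; lia]. }
  assert (Hun : forall i j t, (1 <= i)%nat -> (i < j)%nat -> (j <= K)%nat ->
     0 < t < 1 -> is_F unit_circle M t (N j) -> 1 - u i <= t <= u i).
  { intros i j t Hi Hij HjK Ht HF.
    destruct (HQ i ltac:(lia)) as [Hl _].
    assert (Hnz := nz_of_pos _ _ (Hpos i ltac:(lia))).
    assert (H0 := Hu i ltac:(lia)).
    assert (Hlt := Hmono i j Hi Hij HjK).
    split.
    - destruct (Rlt_or_le t (1 - u i)) as [H|H]; [|lra].
      exfalso. assert (N j <= N i) by (eapply avail; eauto; lra). unfold N in *; lra.
    - destruct (Rlt_or_le (u i) t) as [H|H]; [|lra].
      exfalso. assert (N j <= N i) by (eapply avail; eauto; lra). unfold N in *; lra. }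
  assert (HuB : forall i, (1 <= i <= K)%nat -> u i < 1).
  { intros i Hi. destruct (HQ i Hi) as [_ [Ha _]]. apply Rabs_def2 in Ha. lra. }
  assert (HK : forall i, (1 <= i)%nat -> (i <= K - 1)%nat -> (1 <= K)%nat) by (intros; lia).
  split.
  - intros i j Hi Hij HjK.
    destruct (HV3 K ltac:(lia)) as [tK [HtK [_ HFK]]].
    destruct (HV3 j ltac:(lia)) as [tj [Htj [_ HFj]]].
    assert (A1 := Hun i j tj Hi Hij ltac:(lia) Htj HFj).
    assert (A2 := Hun j K tK ltac:(lia) ltac:(lia) ltac:(lia) HtK HFK).
    assert (B1 := HuB i ltac:(lia)). assert (B2 := HuB j ltac:(lia)).
    assert (Hnz : ~(v1 i - v1 j = 0 /\ v2 i - v2 j = 0)).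
    { intros [E1 E2]. assert (N i < N j) by (apply Hmono; lia).
      unfold N in *. replace (v1 j) with (v1 i) in * by lra.
      replace (v2 j) with (v2 i) in * by lra. lra. }
    assert (HL := lat_sub _ _ _ _ _ _ _ (proj1 (HQ i ltac:(lia))) (proj1 (HQ j ltac:(lia)))).
    assert (N K <= norm2 (v1 i - v1 j) (v2 i - v2 j)).
    { eapply avail; [exact HL|exact Hnz|exact HtK| |exact HFK].
      destruct (Rlt_or_le tK (1 - (u i - u j))); destruct (Rlt_or_le (u i - u j) tK); lra. }
    assert (N j < N K) by (apply Hmono; lia). unfold N in *; lra.
  - intros i j k Hi Hij Hjk HkK.
    destruct (HV3 K ltac:(lia)) as [tK [HtK [_ HFK]]].
    destruct (HV3 k ltac:(lia)) as [tk [Htk [[_ [Qk _]] HFk]]].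
    destruct (HV3 j ltac:(lia)) as [tj [Htj [[_ [Qj _]] HFj]]].
    assert (A1 := Hun i j tj Hi Hij ltac:(lia) Htj HFj).
    assert (A2 := Hun i k tk Hi ltac:(lia) ltac:(lia) Htk HFk).
    assert (A3 := Hun j k tk ltac:(lia) Hjk ltac:(lia) Htk HFk).
    assert (A4 := Hun k K tK ltac:(lia) ltac:(lia) ltac:(lia) HtK HFK).
    assert (A5 := Hun j K tK ltac:(lia) ltac:(lia) ltac:(lia) HtK HFK).
    assert (B1 := HuB i ltac:(lia)). assert (B2 := HuB j ltac:(lia)).
    assert (B3 := HuB k ltac:(lia)).
    assert (HL := lat_sub _ _ _ _ _ _ _ (proj1 (HQ i ltac:(lia))) (proj1 (HQ j ltac:(lia)))).
    assert (HL2 := lat_sub _ _ _ _ _ _ _ HL (proj1 (HQ k ltac:(lia)))).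
    destruct (classic (v1 i - v1 j - v1 k = 0 /\ v2 i - v2 j - v2 k = 0)) as [[E1 E2]|Hnz].
    + exfalso.
      assert (Ek1 : v1 i - v1 j = v1 k) by lra. assert (Ek2 : v2 i - v2 j = v2 k) by lra.
      rewrite Ek1, Ek2 in HL.
      assert (N K <= N k).
      { eapply avail; [exact HL| |exact HtK| |exact HFK]. apply nz_of_pos; apply Hpos; lia.
        destruct (Rlt_or_le tK (1 - (u i - u j))); destruct (Rlt_or_le (u i - u j) tK); lra. }
      assert (N k < N K) by (apply Hmono; lia). lra.
    + apply Rle_ge. eapply avail; [exact HL2|exact Hnz|exact Htk| |exact HFk]. right. lra.
Qed.
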